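(* Let $(a_d)_{d\in\mathbb N}$ be a real sequence and $(b_d)_{d\in\mathbb N}$ a positive sequence with $b_d\to\infty$. Let $q:(0,1)\to\mathbb R$ be non-increasing and let $G$ be a distribution function such that $q(\varepsilon)=G^{-1}(1-\varepsilon^2)$ for all $\varepsilon\in C(q)$. Then $$\ln n^{X_d}(\varepsilon)=a_d+q(\varepsilon)b_d+o(b_d),\quad d\to\infty,\quad\text{for all }\varepsilon\in C(q)$$ holds if and only if $G^{X_d}_{a_d,b_d}$ converges weakly to $G$, i.e. $\lim_{d\to\infty}G^{X_d}_{a_d,b_d}(x)=G(x)$ for all $x\in C(G)$, where $$G^{X_d}_{a_d,b_d}(x)=\sum_{k=1}^\infty\bar\lambda^{X_d}_k\,\mathbf 1\bigl(\bar\lambda^{X_d}_k\ge e^{-a_d-xb_d}\bigr),\quad x\in\mathbb R.$$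
   Context: For each $d\in\mathbb N$, $X_d$ is a random element of a separable Hilbert space $H_d$ with $\mathbb E X_d=0$ and $\mathbb E\|X_d\|_{H_d}^2<\infty$. For a centered Hilbert-space random element $Z$ with finite second moment, $\lambda^Z_1\ge\lambda^Z_2\ge\dots\ge 0$ denote the eigenvalues of its covariance operator listed with multiplicity (padded with zeros if there are finitely many), $\Lambda^Z=\sum_k\lambda^Z_k=\mathbb E\|Z\|^2$, and $\bar\lambda^Z_k=\lambda^Z_k/\Lambda^Z$. It is assumed that $\lambda^{X_d}_1>0$ for all $d$. The average case approximation complexity is $n^{X_d}(\varepsilon)=\min\{n\in\mathbb N: e^{X_d}(n)\le \varepsilon\, e^{X_d}(0)\}$ for $\varepsilon\in(0,1)$, where $e^{X_d}(0)=(\mathbb E\|X_d\|^2)^{1/2}$ and $e^{X_d}(n)$ is the infimum of $(\mathbb E\|X_d-\sum_{m=1}^n l_m(X_d)\psi_m\|^2)^{1/2}$ over all $\psi_m\in H_d$, $l_m\in H_d^*$; equivalently $n^{X_d}(\varepsilon)=\min\{n\in\mathbb N:\ \sum_{k>n}\bar\lambda^{X_d}_k\le\varepsilon^2\}$. A distribution function is a non-decreasing right-continuous $F:\mathbb R\to[0,1]$ with limits $0$ at $-\infty$ and $1$ at $+\infty$. For a function $f$, $C(f)$ denotes its set of continuity points and $f^{-1}(y)=\inf\{x\in\mathbb R: f(x)\ge y\}$ its generalized inverse. $\mathbf 1(A)$ is the indicator of $A$. *)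

(* Defs.v *)
From Stdlib Require Export Reals Lra ClassicalEpsilon.
Open Scope R_scope.

Definition infsum (f : nat -> R) : R :=
  epsilon (inhabits 0) (fun l => infinite_sum f l).

(* Eigenvalue data of a centered Hilbert-space random element with finite
   second moment: lam k = lambda_{k+1} (0-indexed), nonnegative,
   non-increasing, summable, lambda_1 > 0. *)
Definition eigen_seq (lam : nat -> R) : Prop :=
  (forall k, 0 <= lam k) /\ (forall k, lam (S k) <= lam k) /\
  0 < lam 0%nat /\ exists l, infinite_sum lam l.

Definition Lambda (lam : nat -> R) : R := infsum lam.

Definition lbar (lam : nat -> R) (k : nat) : R := lam k / Lambda lam.

(* sum_{k > n} bar lambda_k  (1-indexed), i.e. sum_{j>=0} lbar (n+j) 0-indexed *)
Definition tailsum (lam : nat -> R) (n : nat) : R :=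
  infsum (fun j => lbar lam (n + j)).

Definition ncompl (lam : nat -> R) (eps : R) : nat :=
  epsilon (inhabits 0%nat)
    (fun n => (1 <= n)%nat /\ tailsum lam n <= eps ^ 2 /\
       forall m, (1 <= m)%nat -> (m < n)%nat -> eps ^ 2 < tailsum lam m).

Definition GX (lam : nat -> R) (a b x : R) : R :=
  infsum (fun k => lbar lam k *
    (if Rle_dec (exp (- a - x * b)) (lbar lam k) then 1 else 0)).

Definition distribution_function (F : R -> R) : Prop :=
  (forall x y, x <= y -> F x <= F y) /\
  (forall x, 0 <= F x <= 1) /\
  (forall x e, 0 < e -> exists d, 0 < d /\
       forall y, x <= y < x + d -> Rabs (F y - F x) < e) /\
  (forall e, 0 < e -> exists M, forall x, x <= M -> Rabs (F x) < e) /\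
  (forall e, 0 < e -> exists M, forall x, M <= x -> Rabs (F x - 1) < e).

Definition is_glb (S : R -> Prop) (m : R) : Prop :=
  (forall x, S x -> m <= x) /\ (forall m', (forall x, S x -> m' <= x) -> m' <= m).

Definition geninv (f : R -> R) (y : R) : R :=
  epsilon (inhabits 0) (fun m => is_glb (fun x => y <= f x) m).

Definition Cq (q : R -> R) (eps : R) : Prop :=
  0 < eps < 1 /\ continuity_pt q eps.

(* Main.v *)
Require Import Defs.
From Stdlib Require Import Reals Lra Lia Classical ZArith.
Open Scope R_scope.

Lemma infsum_eq f l : infinite_sum f l -> infsum f = l.
Proof.
  intro H. unfold infsum.
  assert (E : exists l, infinite_sum f l) by eauto.
  pose proof (epsilon_spec (inhabits 0) _ E) as H2.
  eapply uniqueness_sum; eauto.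
Qed.

Fixpoint psum (f : nat -> R) (n : nat) : R :=
  match n with O => 0 | S m => psum f m + f m end.

Lemma psum_sumf f n : psum f (S n) = sum_f_R0 f n.
Proof. induction n; simpl in *; [lra|]. rewrite <- IHn. simpl. lra. Qed.

Lemma psum_nonneg_mono f n m : (forall k, 0 <= f k) -> (n <= m)%nat -> psum f n <= psum f m.
Proof.
  intros Hf H. induction H; [lra|]. simpl. specialize (Hf m). lra.
Qed.

Lemma psum_le_sum f l n : (forall k, 0 <= f k) -> infinite_sum f l -> psum f n <= l.
Proof.
  intros Hf Hl. destruct (Rle_dec (psum f n) l) as [|Hn]; auto.
  exfalso. assert (Hp : psum f n - l > 0) by lra.
  destruct (Hl _ Hp) as [N HN].
  specialize (HN (max N n) (Nat.le_max_l _ _)).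
  rewrite <- psum_sumf in HN. unfold Rdist in HN.
  assert (psum f n <= psum f (S (max N n))) by (apply psum_nonneg_mono; auto; lia).
  apply Rabs_def2 in HN. lra.
Qed.

Lemma psum_ext f g n : (forall k, (k < n)%nat -> f k = g k) -> psum f n = psum g n.
Proof. induction n; intros H; simpl; auto. rewrite IHn, H; auto. Qed.

Lemma psum_le f g n : (forall k, f k <= g k) -> psum f n <= psum g n.
Proof. intros H; induction n; simpl; [lra|]. specialize (H n). lra. Qed.

Lemma psum_add_const f g c n : (forall k, f k <= g k + c) -> psum f n <= psum g n + INR n * c.
Proof. intros H; induction n; simpl; [lra|]. rewrite ?S_INR. specialize (H n). destruct n; simpl in *; lra. Qed.

Lemma sum_cv_of_psum f l : (forall e, e > 0 -> exists N, forall n, (n >= N)%nat -> Rabs (psum f n - l) < e) -> infinite_sum f l.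
Proof.
  intros H e He. destruct (H e He) as [N HN]. exists N. intros n Hn.
  rewrite <- psum_sumf. unfold Rdist. apply HN. lia.
Qed.

Lemma psum_cv f l : infinite_sum f l -> forall e, e > 0 -> exists N, forall n, (n >= N)%nat -> Rabs (psum f n - l) < e.
Proof.
  intros H e He. destruct (H e He) as [N HN]. exists (S N). intros n Hn.
  destruct n; [lia|]. rewrite psum_sumf. apply HN. lia.
Qed.

Lemma shift_sum f l n : infinite_sum f l -> infinite_sum (fun j => f (n + j)%nat) (l - psum f n).
Proof.
  intros H. apply sum_cv_of_psum.
  assert (E : forall N, psum (fun j => f (n + j)%nat) N = psum f (n + N) - psum f n).
  { induction N; simpl. rewrite Nat.add_0_r; lra. rewrite IHN, Nat.add_succ_r. simpl. lra. }
  intros e He. destruct (psum_cv f l H e He) as [N HN]. exists N. intros m Hm.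
  rewrite E. replace (psum f (n + m) - psum f n - (l - psum f n)) with (psum f (n+m) - l) by ring.
  apply HN. lia.
Qed.

Lemma eventually_zero_sum f m : (forall k, (m <= k)%nat -> f k = 0) -> infinite_sum f (psum f m).
Proof.
  intros H. apply sum_cv_of_psum. intros e He. exists m. intros n Hn.
  assert (psum f n = psum f m).
  { induction Hn; auto. simpl. rewrite IHHn, H; [lra|lia]. }
  rewrite H0. rewrite Rminus_diag, Rabs_R0. lra.
Qed.

Lemma comp_summable f g : (forall k, 0 <= g k <= f k) -> (exists l, infinite_sum f l) -> exists l, infinite_sum g l.
Proof.
  intros H [l Hl].
  destruct (Rseries_CV_comp g f H (exist _ l Hl)) as [l' Hl']. exists l'. exact Hl'.
Qed.

Lemma sum_le f g l1 l2 : (forall k, g k <= f k) -> infinite_sum f l1 -> infinite_sum g l2 -> l2 <= l1.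
Proof.
  intros H H1 H2. destruct (Rle_dec l2 l1) as [|Hn]; auto. exfalso.
  assert (He : (l2 - l1)/2 > 0) by lra.
  destruct (psum_cv _ _ H1 _ He) as [N1 HN1]. destruct (psum_cv _ _ H2 _ He) as [N2 HN2].
  specialize (HN1 (max N1 N2) (Nat.le_max_l _ _)). specialize (HN2 (max N1 N2) (Nat.le_max_r _ _)).
  pose proof (psum_le g f (max N1 N2) H).
  apply Rabs_def2 in HN1. apply Rabs_def2 in HN2. lra.
Qed.

Lemma min_exists (P : nat -> Prop) : (exists n, P n) -> exists n, P n /\ forall m, (m < n)%nat -> ~ P m.
Proof.
  intros [n Hn]. revert Hn. induction n as [n IH] using (well_founded_induction Wf_nat.lt_wf). intros Hn.
  destruct (classic (exists m, (m < n)%nat /\ P m)) as [[m [Hm Pm]]|Hno].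
  - exact (IH m Hm Pm).
  - exists n. split; auto. intros m Hm Pm. apply Hno; eauto.
Qed.

Lemma psum_div f l n : psum (fun k => f k / l) n = psum f n / l.
Proof. induction n; simpl. unfold Rdiv; ring. rewrite IHn. unfold Rdiv; ring. Qed.

Lemma lbar_facts lam : eigen_seq lam ->
  0 < Lambda lam /\ (forall k, 0 <= lbar lam k) /\ (forall k, lbar lam (S k) <= lbar lam k) /\
  infinite_sum (lbar lam) 1.
Proof.
  intros [H0 [H1 [H2 [l Hl]]]].
  assert (EL : Lambda lam = l) by (apply infsum_eq; auto).
  assert (Lp : 0 < l).
  { pose proof (psum_le_sum lam l 1 H0 Hl). simpl in H. lra. }
  rewrite EL. split; [lra|]. unfold lbar. rewrite EL. split; [|split].
  - intros k. unfold Rdiv. apply Rmult_le_pos; auto. left; apply Rinv_0_lt_compat; auto.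
  - intros k. apply Rmult_le_compat_r; auto. left; apply Rinv_0_lt_compat; auto.
  - apply sum_cv_of_psum. intros e He.
    assert (He' : e * l > 0) by nra.
    destruct (psum_cv _ _ Hl _ He') as [N HN]. exists N. intros n Hn.
    rewrite psum_div. specialize (HN n Hn).
    apply Rabs_def2 in HN. unfold Rdiv.
    assert (Hi : / l * l = 1) by (apply Rinv_l; lra).
    assert (Hip : 0 < / l) by (apply Rinv_0_lt_compat; lra).
    apply Rabs_def1; nra.
Qed.

Section Fixed.
Variable lam : nat -> R.
Hypothesis hl : eigen_seq lam.

Lemma lb_nonneg k : 0 <= lbar lam k.
Proof. apply (lbar_facts lam hl). Qed.
Lemma lb_sum : infinite_sum (lbar lam) 1.
Proof. apply (lbar_facts lam hl). Qed.
Lemma lb_dec j k : (j <= k)%nat -> lbar lam k <= lbar lam j.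
Proof.
  intros H. induction H; [lra|]. pose proof (proj1 (proj2 (proj2 (lbar_facts lam hl))) m). lra.
Qed.
Lemma psum_le1 n : psum (lbar lam) n <= 1.
Proof. apply psum_le_sum; [apply lb_nonneg | apply lb_sum]. Qed.
Lemma lb_le1 k : lbar lam k <= 1.
Proof.
  pose proof (psum_le1 (S k)). simpl in H. pose proof (psum_nonneg_mono (lbar lam) 0 k lb_nonneg (Nat.le_0_l _)).
  simpl in H0. lra.
Qed.
Lemma lb_idx t k : t <= lbar lam k -> INR (S k) * t <= 1.
Proof.
  intros H. pose proof (psum_le1 (S k)).
  assert (forall n, (n <= S k)%nat -> INR n * t <= psum (lbar lam) n).
  { induction n; intros Hn. simpl; lra. rewrite S_INR; cbn [psum].
    assert (lbar lam k <= lbar lam n) by (apply lb_dec; lia).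
    specialize (IHn ltac:(lia)). lra. }
  specialize (H1 (S k) (le_n _)). lra.
Qed.

Lemma tailsum_eq n : tailsum lam n = 1 - psum (lbar lam) n.
Proof. unfold tailsum. apply infsum_eq. apply shift_sum. apply lb_sum. Qed.

Lemma ncompl_spec eps : 0 < eps < 1 ->
  (1 <= ncompl lam eps)%nat /\ 1 - eps ^ 2 <= psum (lbar lam) (ncompl lam eps) /\
  forall m, (1 <= m)%nat -> (m < ncompl lam eps)%nat -> psum (lbar lam) m < 1 - eps ^ 2.
Proof.
  intros He.
  assert (Ex : exists n, (1 <= n)%nat /\ tailsum lam n <= eps ^ 2).
  { assert (Hp : eps ^ 2 > 0) by (simpl; nra).
    destruct (psum_cv _ _ lb_sum _ Hp) as [N HN]. exists (S N). split; [lia|].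
    specialize (HN (S N) ltac:(lia)). rewrite tailsum_eq. apply Rabs_def2 in HN. lra. }
  apply min_exists in Ex.
  assert (Ex2 : exists n, (1 <= n)%nat /\ tailsum lam n <= eps ^ 2 /\
       forall m, (1 <= m)%nat -> (m < n)%nat -> eps ^ 2 < tailsum lam m).
  { destruct Ex as [n [[H1 H2] H3]]. exists n. split; auto. split; auto.
    intros m Hm1 Hm2. apply Rnot_le_lt. intro. apply (H3 m Hm2). auto. }
  pose proof (epsilon_spec (inhabits 0%nat) _ Ex2) as Hs. fold (ncompl lam eps) in Hs.
  destruct Hs as [S1 [S2 S3]]. rewrite tailsum_eq in S2. split; auto. split; [lra|].
  intros m H1 H2. specialize (S3 m H1 H2). rewrite tailsum_eq in S3. lra.
Qed.

Definition gind (t : R) (k : nat) : R :=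
  lbar lam k * (if Rle_dec t (lbar lam k) then 1 else 0).

Lemma gind_bounds t k : 0 <= gind t k <= lbar lam k.
Proof. unfold gind. pose proof (lb_nonneg k). destruct Rle_dec; lra. Qed.

Lemma gind_sum t : infinite_sum (gind t) (infsum (gind t)).
Proof.
  destruct (comp_summable (lbar lam) (gind t) (gind_bounds t) (ex_intro _ 1 lb_sum)) as [l Hl].
  rewrite (infsum_eq _ _ Hl). auto.
Qed.

Lemma G_bounds t : 0 <= infsum (gind t) <= 1.
Proof.
  split.
  - apply (sum_le (gind t) (fun _ => 0) (infsum (gind t)) 0).
    + intros; apply gind_bounds.
    + apply gind_sum.
    + exact (eventually_zero_sum (fun _ => 0) 0 (fun _ _ => eq_refl)).
  - apply (sum_le (lbar lam) (gind t)); [intros; apply gind_bounds| apply lb_sum | apply gind_sum].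
Qed.

Lemma psum_le_G t n : 0 <= t -> psum (lbar lam) n <= infsum (gind t) + INR n * t.
Proof.
  intros Ht. assert (psum (lbar lam) n <= psum (gind t) n + INR n * t).
  { apply psum_add_const. intros k. unfold gind. destruct Rle_dec; lra. }
  pose proof (psum_le_sum (gind t) _ n (fun k => proj1 (gind_bounds t k)) (gind_sum t)). lra.
Qed.

Lemma G_le_psum t m : (forall k, t <= lbar lam k -> (k < m)%nat) -> infsum (gind t) <= psum (lbar lam) m.
Proof.
  intros H.
  assert (Hs : infinite_sum (gind t) (psum (gind t) m)).
  { apply eventually_zero_sum. intros k Hk. unfold gind. destruct Rle_dec as [r|]; [|ring].
    specialize (H k r). lia. }
  rewrite (infsum_eq _ _ Hs). apply psum_le. intros; apply gind_bounds.
Qed.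

Lemma nat_floor r : 0 <= r -> exists m : nat, INR m <= r < INR m + 1.
Proof.
  intros Hr. destruct (archimed r) as [H1 H2].
  assert (Hz : (0 < up r)%Z) by (apply lt_IZR; lra).
  exists (Z.to_nat (up r - 1)). rewrite INR_IZR_INZ, Z2Nat.id by lia.
  rewrite minus_IZR. lra.
Qed.

Lemma K1 t eps : 0 < t -> 0 < eps < 1 -> infsum (gind t) > 1 - eps ^ 2 ->
  INR (ncompl lam eps) <= / t.
Proof.
  intros Ht He HG.
  assert (Hy : 0 < 1 - eps ^ 2) by (simpl; nra).
  assert (Ht1 : t <= 1).
  { destruct (Rle_dec t 1) as [|Hn]; auto. exfalso.
    assert (infsum (gind t) <= psum (lbar lam) 0).
    { apply G_le_psum. intros k Hk. pose proof (lb_le1 k). lra. }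
    simpl in H. lra. }
  assert (Hit : 1 <= / t).
  { rewrite <- Rinv_1. apply Rinv_le_contravar; lra. }
  destruct (nat_floor (/ t)) as [m [Hm1 Hm2]]; [lra|].
  assert (Hm : (1 <= m)%nat).
  { destruct m; [simpl in Hm2; lra| lia]. }
  assert (Hk : forall k, t <= lbar lam k -> (k < m)%nat).
  { intros k Hk. pose proof (lb_idx t k Hk).
    assert (INR (S k) <= / t).
    { apply Rmult_le_reg_r with t; auto. rewrite Rinv_l by lra. lra. }
    assert (INR (S k) < INR m + 1) by lra. rewrite <- S_INR in H1. apply INR_lt in H1. lia. }
  pose proof (G_le_psum t m Hk).
  destruct (ncompl_spec eps He) as [_ [_ S3]].
  destruct (le_lt_dec (ncompl lam eps) m) as [Hle|Hlt].
  - apply le_INR in Hle. lra.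
  - specialize (S3 m Hm Hlt). lra.
Qed.

Lemma K3 t eps : 0 < t -> 0 < eps < 1 -> / t < INR (ncompl lam eps) ->
  infsum (gind t) < 1 - eps ^ 2.
Proof.
  intros Ht He Hn.
  set (n := ncompl lam eps) in *.
  destruct (ncompl_spec eps He) as [S1 [_ S3]]. fold n in S1, S3.
  assert (Hk : forall k, t <= lbar lam k -> (k < n - 1)%nat).
  { intros k Hk. pose proof (lb_idx t k Hk).
    assert (INR (S k) <= / t).
    { apply Rmult_le_reg_r with t; auto. rewrite Rinv_l by lra. lra. }
    assert (INR (S k) < INR n) by lra. apply INR_lt in H1. lia. }
  pose proof (G_le_psum t _ Hk).
  destruct (Nat.eq_dec (n - 1) 0) as [E|E].
  - rewrite E in H. simpl in H. simpl; nra.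
  - specialize (S3 (n - 1)%nat ltac:(lia) ltac:(lia)). lra.
Qed.

End Fixed.

Lemma cont_of_ed f c : (forall e, e > 0 -> exists d, d > 0 /\ forall z, Rabs (z - c) < d -> Rabs (f z - f c) < e) -> continuity_pt f c.
Proof.
  intros H e He. destruct (H e He) as [d [Hd Hz]]. exists d. split; auto.
  intros x [_ Hx]. apply Hz. exact Hx.
Qed.

Lemma ed_of_cont f c : continuity_pt f c -> forall e, e > 0 -> exists d, d > 0 /\ forall z, Rabs (z - c) < d -> Rabs (f z - f c) < e.
Proof.
  intros H e He. destruct (H e He) as [d [Hd Hz]]. exists d. split; auto.
  intros z Hzc. destruct (Req_dec z c) as [E|E].
  - subst. rewrite Rminus_diag, Rabs_R0. lra.
  - apply (Hz z). split; auto. split; [exact I| auto].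
Qed.

Definition step (f : R -> R) (p : R * R) : R * R :=
  let (s, t) := p in let L := t - s in
  if Rle_dec (f (s + 3 * L / 8) - f (s + L / 8)) (f (s + 7 * L / 8) - f (s + 5 * L / 8))
  then (s + L / 8, s + 3 * L / 8) else (s + 5 * L / 8, s + 7 * L / 8).

Fixpoint iv f u v n : R * R := match n with O => (u, v) | S n => step f (iv f u v n) end.

Lemma pow2_ge n : INR n <= 2 ^ n.
Proof.
  induction n. simpl; lra. rewrite S_INR. simpl. pose proof (pow_R1_Rle 2 n ltac:(lra)). lra.
Qed.

Section Dens.
Variables (f : R -> R) (u v : R).
Hypothesis huv : u < v.
Hypothesis hf : forall x y, u <= x -> x <= y -> y <= v -> f x <= f y.

Lemma step_spec s t : u <= s -> s < t -> t <= v ->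
  s + (t - s) / 8 <= fst (step f (s, t)) /\ fst (step f (s, t)) < snd (step f (s, t)) /\
  snd (step f (s, t)) <= t - (t - s) / 8 /\
  2 * (f (snd (step f (s, t))) - f (fst (step f (s, t)))) <= f t - f s.
Proof.
  intros H1 H2 H3. unfold step.
  set (L := t - s).
  assert (M1 : f s <= f (s + L / 8)) by (apply hf; unfold L; lra).
  assert (M2 : f (s + 3 * L / 8) <= f (s + 5 * L / 8)) by (apply hf; unfold L; lra).
  assert (M3 : f (s + 7 * L / 8) <= f t) by (apply hf; unfold L; lra).
  destruct Rle_dec; simpl; unfold L in *; repeat split; lra.
Qed.

Lemma iv_inv n : u <= fst (iv f u v n) /\ fst (iv f u v n) < snd (iv f u v n) /\ snd (iv f u v n) <= v /\
  2 ^ n * (f (snd (iv f u v n)) - f (fst (iv f u v n))) <= f v - f u.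
Proof.
  induction n; simpl. lra.
  destruct (iv f u v n) as [s t]. simpl in IHn. destruct IHn as [I1 [I2 [I3 I4]]].
  destruct (step_spec s t I1 I2 I3) as [S1 [S2 [S3 S4]]].
  pose proof (pow_lt 2 n ltac:(lra)). repeat split; try lra. nra.
Qed.

Lemma iv_step n : fst (iv f u v n) + (snd (iv f u v n) - fst (iv f u v n)) / 8 <= fst (iv f u v (S n)) /\
  snd (iv f u v (S n)) <= snd (iv f u v n) - (snd (iv f u v n) - fst (iv f u v n)) / 8.
Proof.
  pose proof (iv_inv n) as [I1 [I2 [I3 _]]]. change (iv f u v (S n)) with (step f (iv f u v n)).
  destruct (iv f u v n) as [s t]. cbn [fst snd] in *.
  destruct (step_spec s t I1 I2 I3) as [S1 [S2 [S3 S4]]]. lra.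
Qed.

Lemma iv_mono n m : (n <= m)%nat -> fst (iv f u v n) <= fst (iv f u v m) /\ snd (iv f u v m) <= snd (iv f u v n).
Proof.
  intros H. induction H. lra. pose proof (iv_step m). pose proof (iv_inv m). lra.
Qed.

Lemma iv_le n m : fst (iv f u v n) <= snd (iv f u v m).
Proof.
  pose proof (iv_mono n (max n m) (Nat.le_max_l _ _)).
  pose proof (iv_mono m (max n m) (Nat.le_max_r _ _)).
  pose proof (iv_inv (max n m)). lra.
Qed.

Lemma mono_cont_point : exists c, u < c < v /\ continuity_pt f c.
Proof.
  set (E := fun x => exists n, x = fst (iv f u v n)).
  assert (Hb : bound E).
  { exists v. intros x [n ->]. pose proof (iv_inv n). lra. }
  assert (Hne : exists x, E x) by (exists u; exists 0%nat; reflexivity).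
  destruct (completeness E Hb Hne) as [c [Hc1 Hc2]].
  assert (Cs : forall n, fst (iv f u v n) <= c) by (intros n; apply Hc1; exists n; auto).
  assert (Ct : forall n, c <= snd (iv f u v n)).
  { intros n. apply Hc2. intros x [m ->]. apply iv_le. }
  exists c. split.
  - pose proof (iv_step 0). pose proof (Cs 1%nat). pose proof (Ct 1%nat). simpl in *. lra.
  - apply cont_of_ed. intros e He.
    assert (HD0 : f u <= f v) by (apply hf; lra). assert (HD : 0 <= f v - f u) by lra.
    destruct (nat_floor ((f v - f u) / e)) as [m [_ Hm]].
    { unfold Rdiv. apply Rmult_le_pos; auto. left; apply Rinv_0_lt_compat; auto. }
    set (n := S m).
    assert (Hn : (f v - f u) / e < 2 ^ n).
    { pose proof (pow2_ge n). unfold n in *. rewrite S_INR in H. lra. }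
    pose proof (iv_inv n) as [I1 [I2 [I3 I4]]].
    pose proof (iv_step n) as [J1 J2].
    pose proof (Cs (S n)). pose proof (Ct (S n)).
    set (s := fst (iv f u v n)) in *. set (t := snd (iv f u v n)) in *.
    exists ((t - s) / 8). split; [lra|].
    intros z Hz. apply Rabs_def2 in Hz.
    assert (F1 : f s <= f z) by (apply hf; lra).
    assert (F2 : f z <= f t) by (apply hf; lra).
    assert (F3 : f s <= f c) by (apply hf; lra).
    assert (F4 : f c <= f t) by (apply hf; lra).
    assert (Hp : 0 < 2 ^ n) by (apply pow_lt; lra).
    assert (f v - f u < e * 2 ^ n).
    { apply Rmult_lt_reg_r with (/ e). apply Rinv_0_lt_compat; lra.
      rewrite (Rmult_comm e), Rmult_assoc, Rinv_r, Rmult_1_r by lra. exact Hn. }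
    assert (f t - f s < e) by nra.
    apply Rabs_def1; lra.
Qed.
End Dens.

Lemma Cq_dense q (hq : forall e1 e2, 0 < e1 -> e1 <= e2 -> e2 < 1 -> q e2 <= q e1) u v :
  0 < u -> u < v -> v < 1 -> exists c, u < c < v /\ Cq q c.
Proof.
  intros H1 H2 H3.
  destruct (mono_cont_point (fun z => - q z) u v H2) as [c [Hc Hcont]].
  { intros x y Hx Hxy Hy. apply Ropp_le_contravar. apply hq; lra. }
  exists c. split; auto. split; [lra|].
  apply cont_of_ed. intros e He. destruct (ed_of_cont _ _ Hcont e He) as [d [Hd Hz]].
  exists d. split; auto. intros z Hzc. specialize (Hz z Hzc).
  replace (q z - q c) with (- (- q z - - q c)) by ring. rewrite Rabs_Ropp. auto.
Qed.

Lemma G_dense G (hG : distribution_function G) u v : u < v -> exists c, u < c < v /\ continuity_pt G c.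
Proof.
  intros H. apply mono_cont_point; auto. intros x y _ Hxy _. apply hG; auto.
Qed.

Lemma geninv_spec G (hG : distribution_function G) y : 0 < y < 1 ->
  is_glb (fun x => y <= G x) (geninv G y).
Proof.
  intros Hy. destruct hG as [Hm [H01 [Hr [H0 H1]]]].
  assert (Ex : exists m, is_glb (fun x => y <= G x) m).
  { destruct (H1 (1 - y) ltac:(lra)) as [M1 HM1].
    destruct (H0 y ltac:(lra)) as [M0 HM0].
    set (E := fun w => y <= G (- w)).
    assert (Hb : bound E).
    { exists (- M0). intros w Hw. unfold E in Hw. destruct (Rle_dec (- w) M0) as [Hle|Hn].
      - specialize (HM0 _ Hle). apply Rabs_def2 in HM0. lra.
      - lra. }
    assert (Hne : exists w, E w).
    { exists (- M1). unfold E. rewrite Ropp_involutive. specialize (HM1 M1 (Rle_refl _)).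
      apply Rabs_def2 in HM1. lra. }
    destruct (completeness E Hb Hne) as [m [Hm1 Hm2]].
    exists (- m). split.
    - intros x Hx. assert (E (- x)) by (unfold E; rewrite Ropp_involutive; auto).
      specialize (Hm1 _ H). lra.
    - intros m' Hm'. assert (m <= - m').
      { apply Hm2. intros w Hw. specialize (Hm' _ Hw). lra. }
      lra. }
  exact (epsilon_spec (inhabits 0) _ Ex).
Qed.

Lemma ln_le_of z r : 0 < z -> z <= exp r -> ln z <= r.
Proof.
  intros Hz H. destruct (Rle_dec (ln z) r) as [|Hn]; auto. exfalso.
  pose proof (exp_increasing r (ln z) ltac:(lra)). rewrite exp_ln in H0 by auto. lra.
Qed.

Lemma ln_ge_of z r : 0 < z -> exp r <= z -> r <= ln z.
Proof.
  intros Hz H. destruct (Rle_dec r (ln z)) as [|Hn]; auto. exfalso.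
  pose proof (exp_increasing (ln z) r ltac:(lra)). rewrite exp_ln in H0 by auto. lra.
Qed.

Lemma GX_eq lam a b x : GX lam a b x = infsum (gind lam (exp (- a - x * b))).
Proof. reflexivity. Qed.

Lemma n_pos lam eps : eigen_seq lam -> 0 < eps < 1 -> 1 <= INR (ncompl lam eps).
Proof.
  intros hl He. destruct (ncompl_spec lam hl eps He) as [H _]. apply le_INR in H. simpl in H. lra.
Qed.

Lemma H_up lam a b x eps : eigen_seq lam -> 0 < eps < 1 -> GX lam a b x > 1 - eps ^ 2 ->
  ln (INR (ncompl lam eps)) <= a + x * b.
Proof.
  intros hl He HG. rewrite GX_eq in HG. pose proof (n_pos lam eps hl He).
  pose proof (K1 lam hl _ eps (exp_pos _) He HG).
  apply ln_le_of; [lra|]. rewrite <- exp_Ropp in H0. replace (- (- a - x * b)) with (a + x * b) in H0 by ring. auto.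
Qed.

Lemma H_low lam a b x eps c : eigen_seq lam -> 0 < eps < 1 -> 0 < c -> GX lam a b x <= 1 - eps ^ 2 - c ->
  a + x * b + ln c <= ln (INR (ncompl lam eps)).
Proof.
  intros hl He Hc HG. rewrite GX_eq in HG. pose proof (n_pos lam eps hl He).
  destruct (ncompl_spec lam hl eps He) as [_ [S2 _]].
  pose proof (psum_le_G lam hl (exp (- a - x * b)) (ncompl lam eps) (Rlt_le _ _ (exp_pos _))).
  set (n := INR (ncompl lam eps)) in *.
  assert (c <= n * exp (- a - x * b)) by lra.
  apply ln_ge_of; [lra|]. replace (a + x * b + ln c) with (ln c - (- a - x * b)) by ring.
  unfold Rminus. rewrite exp_plus, exp_Ropp, exp_ln by auto.
  pose proof (exp_pos (- a - x * b)).
  apply Rmult_le_reg_r with (exp (- a - x * b)); auto.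
  rewrite Rmult_assoc, Rinv_l by lra. lra.
Qed.

Lemma H_GXhigh lam a b x eps : eigen_seq lam -> 0 < eps < 1 -> exp (a + x * b) < INR (ncompl lam eps) ->
  GX lam a b x < 1 - eps ^ 2.
Proof.
  intros hl He H. rewrite GX_eq. apply K3; auto. apply exp_pos.
  rewrite <- exp_Ropp. replace (- (- a - x * b)) with (a + x * b) by ring. auto.
Qed.

Lemma H_GXlow lam a b x eps : eigen_seq lam -> 0 < eps < 1 ->
  1 - eps ^ 2 - INR (ncompl lam eps) * exp (- a - x * b) <= GX lam a b x.
Proof.
  intros hl He. rewrite GX_eq.
  destruct (ncompl_spec lam hl eps He) as [_ [S2 _]].
  pose proof (psum_le_G lam hl (exp (- a - x * b)) (ncompl lam eps) (Rlt_le _ _ (exp_pos _))). lra.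
Qed.

Lemma ratio_cv (X b : nat -> R) : (forall d, 0 < b d) ->
  (forall δ, δ > 0 -> exists N, forall d, (N <= d)%nat -> Rabs (X d) < δ * b d) ->
  Un_cv (fun d => X d / b d) 0.
Proof.
  intros hb H e He. destruct (H e He) as [N HN]. exists N. intros d Hd.
  specialize (HN d Hd). specialize (hb d). unfold Rdist. rewrite Rminus_0_r.
  unfold Rdiv. rewrite Rabs_mult, Rabs_inv, (Rabs_pos_eq (b d)) by lra.
  apply Rmult_lt_reg_r with (b d); auto. rewrite Rmult_assoc, Rinv_l by lra. lra.
Qed.

Lemma cv_ratio (X b : nat -> R) : (forall d, 0 < b d) -> Un_cv (fun d => X d / b d) 0 ->
  (forall δ, δ > 0 -> exists N, forall d, (N <= d)%nat -> Rabs (X d) < δ * b d).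
Proof.
  intros hb H e He. destruct (H e He) as [N HN]. exists N. intros d Hd.
  specialize (HN d Hd). specialize (hb d). unfold Rdist in HN. rewrite Rminus_0_r in HN.
  unfold Rdiv in HN. rewrite Rabs_mult, Rabs_inv, (Rabs_pos_eq (b d)) in HN by lra.
  replace (Rabs (X d)) with (Rabs (X d) * / b d * b d) by (field; lra).
  apply Rmult_lt_compat_r; auto.
Qed.

Lemma glb_approx (S : R -> Prop) m r : is_glb S m -> m < r -> exists z, S z /\ z < r.
Proof.
  intros [H1 H2] Hr. apply NNPP. intro Hn.
  assert (r <= m).
  { apply H2. intros x Hx. destruct (Rle_dec r x) as [|Hl]; auto. exfalso. apply Hn. exists x. split; auto. lra. }
  lra.
Qed.

Lemma pick_eps q (hq : forall e1 e2, 0 < e1 -> e1 <= e2 -> e2 < 1 -> q e2 <= q e1) L U :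
  0 <= L -> L < U -> U <= 1 -> exists eps, Cq q eps /\ L < 1 - eps ^ 2 < U.
Proof.
  intros H1 H2 H3.
  set (u0 := sqrt (1 - U)). set (v0 := sqrt (1 - L)).
  assert (Hu0 : 0 <= u0) by apply sqrt_pos.
  assert (Huv : u0 < v0) by (apply sqrt_lt_1; lra).
  assert (Hv1 : v0 <= 1) by (rewrite <- sqrt_1; apply sqrt_le_1; lra).
  assert (Eu : u0 * u0 = 1 - U) by (apply sqrt_sqrt; lra).
  assert (Ev : v0 * v0 = 1 - L) by (apply sqrt_sqrt; lra).
  destruct (Cq_dense q hq ((2 * u0 + v0) / 3) ((u0 + 2 * v0) / 3)) as [eps [He Hc]]; try lra.
  exists eps. split; auto. simpl. split; nra.
Qed.

Lemma ev_max (P1 P2 : nat -> Prop) : (exists N, forall d, (N <= d)%nat -> P1 d) ->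
  (exists N, forall d, (N <= d)%nat -> P2 d) -> exists N, forall d, (N <= d)%nat -> P1 d /\ P2 d.
Proof.
  intros [N1 H1] [N2 H2]. exists (max N1 N2). intros d Hd. split; [apply H1|apply H2]; lia.
Qed.

Theorem theorem1
  (lam : nat -> nat -> R) (hlam : forall d, eigen_seq (lam d))
  (a b : nat -> R) (hb : forall d, 0 < b d) (hbinf : cv_infty b)
  (q : R -> R)
  (hq : forall e1 e2, 0 < e1 -> e1 <= e2 -> e2 < 1 -> q e2 <= q e1)
  (G : R -> R) (hG : distribution_function G)
  (hqG : forall eps, Cq q eps -> q eps = geninv G (1 - eps ^ 2)) :
  (forall eps, Cq q eps ->
     Un_cv (fun d => (ln (INR (ncompl (lam d) eps)) - a d - q eps * b d) / b d) 0)
  <->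
  (forall x, continuity_pt G x ->
     Un_cv (fun d => GX (lam d) (a d) (b d) x) (G x)).
Proof.
  assert (Gmono : forall x y, x <= y -> G x <= G y) by apply hG.
  assert (G01 : forall x, 0 <= G x <= 1) by apply hG.
  split.
  -
    intros Ha x Hx e He.
    assert (Low : exists N, forall d, (N <= d)%nat -> G x - e < GX (lam d) (a d) (b d) x).
    { destruct (Rlt_dec (G x - e) 0) as [Hneg|Hpos].
      - exists 0%nat. intros d _. pose proof (G_bounds (lam d) (hlam d) (exp (- a d - x * b d))).
        rewrite GX_eq. lra.
      - apply Rnot_lt_le in Hpos. pose proof (G01 x) as HG01.
        destruct (pick_eps q hq (G x - e) (G x)) as [eps [Hc [Hy1 Hy2]]]; try lra.
        set (y := 1 - eps ^ 2) in *.
        assert (Hep : 0 < eps < 1) by apply Hc.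
        destruct (ed_of_cont G x Hx (G x - y) ltac:(lra)) as [d0 [Hd0 Hz]].
        set (z := x - d0 / 2).
        assert (Gz : y <= G z).
        { assert (Hzx : Rabs (z - x) < d0) by (unfold z; rewrite Rabs_left by lra; lra).
          specialize (Hz z Hzx). apply Rabs_def2 in Hz. lra. }
        assert (Hy01 : 0 < y < 1) by lra.
        pose proof (geninv_spec G hG y Hy01) as [Hg1 _].
        assert (Hqz : q eps <= z) by (rewrite (hqG eps Hc); apply Hg1; auto).
        set (δ := d0 / 4).
        set (c := y - (G x - e)).
        assert (Hcp : 0 < c) by (unfold c; lra).
        destruct (ev_max _ _ (cv_ratio _ _ hb (Ha eps Hc) δ ltac:(unfold δ; lra))
                              (hbinf (- ln c / δ))) as [N HN].
        exists N. intros d Hd. destruct (HN d Hd) as [H1 H2].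
        pose proof (hb d) as Hbd. apply Rabs_def2 in H1.
        pose proof (H_GXlow (lam d) (a d) (b d) x eps (hlam d) Hep). fold y in H.
        pose proof (n_pos (lam d) eps (hlam d) Hep).
        set (n := INR (ncompl (lam d) eps)) in *.
        assert (Hl : ln n - a d - x * b d < - (δ * b d)).
        { assert (q eps * b d <= z * b d) by (apply Rmult_le_compat_r; lra).
          unfold z, δ in *. nra. }
        assert (Hdb : - (δ * b d) < ln c).
        { assert (δ * (- ln c / δ) = - ln c) by (field; unfold δ; lra).
          assert (0 < δ) by (unfold δ; lra). nra. }
        assert (n * exp (- a d - x * b d) < c).
        { rewrite <- (exp_ln n) by lra. rewrite <- exp_plus. rewrite <- (exp_ln c) by lra.
          apply exp_increasing. lra. }
        unfold c in *; lra. }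
    assert (Up : exists N, forall d, (N <= d)%nat -> GX (lam d) (a d) (b d) x < G x + e).
    { destruct (Rlt_dec 1 (G x + e)) as [Hbig|Hsm].
      - exists 0%nat. intros d _. pose proof (G_bounds (lam d) (hlam d) (exp (- a d - x * b d))).
        rewrite GX_eq. lra.
      - apply Rnot_lt_le in Hsm. pose proof (G01 x) as HG01.
        destruct (pick_eps q hq (G x) (G x + e)) as [eps [Hc [Hy1 Hy2]]]; try lra.
        set (y := 1 - eps ^ 2) in *.
        assert (Hep : 0 < eps < 1) by apply Hc.
        destruct (ed_of_cont G x Hx (y - G x) ltac:(lra)) as [d0 [Hd0 Hz]].
        set (z := x + d0 / 2).
        assert (Gz : G z < y).
        { assert (Hzx : Rabs (z - x) < d0) by (unfold z; rewrite Rabs_right by lra; lra).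
          specialize (Hz z Hzx). apply Rabs_def2 in Hz. lra. }
        assert (Hy01 : 0 < y < 1).
        { pose proof (G01 x). lra. }
        pose proof (geninv_spec G hG y Hy01) as [_ Hg2].
        assert (Hqz : z <= q eps).
        { rewrite (hqG eps Hc). apply Hg2. intros w Hw.
          destruct (Rle_dec z w) as [|Hn]; auto. pose proof (Gmono w z ltac:(lra)). lra. }
        set (δ := d0 / 4).
        destruct (cv_ratio _ _ hb (Ha eps Hc) δ ltac:(unfold δ; lra)) as [N HN].
        exists N. intros d Hd. specialize (HN d Hd).
        pose proof (hb d) as Hbd. apply Rabs_def2 in HN.
        pose proof (n_pos (lam d) eps (hlam d) Hep).
        assert (exp (a d + x * b d) < INR (ncompl (lam d) eps)).
        { rewrite <- (exp_ln (INR (ncompl (lam d) eps))) by lra. apply exp_increasing.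
          assert (z * b d <= q eps * b d) by (apply Rmult_le_compat_r; lra).
          unfold z, δ in *. nra. }
        pose proof (H_GXhigh (lam d) (a d) (b d) x eps (hlam d) Hep H0). fold y in H1. lra. }
    destruct (ev_max _ _ Low Up) as [N HN]. exists N. intros d Hd.
    destruct (HN d Hd). unfold Rdist. apply Rabs_def1; lra.
  -
    intros Hw eps Hc.
    assert (Hep : 0 < eps < 1) by apply Hc.
    set (y := 1 - eps ^ 2).
    assert (Hy01 : 0 < y < 1) by (unfold y; simpl; nra).
    pose proof (geninv_spec G hG y Hy01) as Hglb.
    assert (Eq : q eps = geninv G y) by (apply hqG; auto). rewrite <- Eq in Hglb.
    apply ratio_cv; auto. intros δ Hδ.
    assert (Up : exists N, forall d, (N <= d)%nat ->
              ln (INR (ncompl (lam d) eps)) - a d - q eps * b d < δ * b d).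
    { destruct (ed_of_cont q eps (proj2 Hc) (δ / 2) ltac:(lra)) as [η [Hη Hq]].
      destruct (Cq_dense q hq (Rmax (eps / 2) (eps - η / 2)) eps) as [eps' [He' Hc']].
      + pose proof (Rmax_l (eps / 2) (eps - η / 2)). lra.
      + apply Rmax_lub_lt; lra.
      + lra.
      + pose proof (Rmax_l (eps / 2) (eps - η / 2)). pose proof (Rmax_r (eps / 2) (eps - η / 2)).
        assert (Hqe : q eps' < q eps + δ / 2).
        { assert (Rabs (eps' - eps) < η) by (rewrite Rabs_left by lra; lra).
          specialize (Hq eps' H1). apply Rabs_def2 in Hq. lra. }
        assert (Hep' : 0 < eps' < 1) by apply Hc'.
        set (y' := 1 - eps' ^ 2).
        assert (Hyy : y < y') by (unfold y, y'; simpl; nra).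
        assert (Hy'1 : 0 < y' < 1) by (unfold y'; simpl; nra).
        pose proof (geninv_spec G hG y' Hy'1) as Hglb'.
        assert (Eq' : q eps' = geninv G y') by (apply hqG; auto). rewrite <- Eq' in Hglb'.
        destruct (glb_approx _ _ (q eps' + δ / 4) Hglb' ltac:(lra)) as [z [Hz1 Hz2]].
        destruct (G_dense G hG z (q eps + δ)) as [x [Hx1 Hx2]]; [lra|].
        assert (Gx : y < G x) by (pose proof (Gmono z x ltac:(lra)); lra).
        destruct (Hw x Hx2 (G x - y) ltac:(lra)) as [N HN].
        exists N. intros d Hd. specialize (HN d Hd). unfold Rdist in HN. apply Rabs_def2 in HN.
        pose proof (H_up (lam d) (a d) (b d) x eps (hlam d) Hep ltac:(fold y; lra)).
        pose proof (hb d). nra. }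
    assert (Lo : exists N, forall d, (N <= d)%nat ->
              - (δ * b d) < ln (INR (ncompl (lam d) eps)) - a d - q eps * b d).
    { destruct (G_dense G hG (q eps - δ / 2) (q eps)) as [x [Hx1 Hx2]]; [lra|].
      assert (Gx : G x < y).
      { destruct (Rlt_dec (G x) y) as [|Hn]; auto. exfalso.
        pose proof (proj1 Hglb x ltac:(lra)). lra. }
      set (c := (y - G x) / 2).
      destruct (ev_max _ _ (Hw x Hx2 c ltac:(unfold c; lra)) (hbinf (- 2 * ln c / δ))) as [N HN].
      exists N. intros d Hd. destruct (HN d Hd) as [H1 H2].
      unfold Rdist in H1. apply Rabs_def2 in H1.
      pose proof (H_low (lam d) (a d) (b d) x eps c (hlam d) Hep ltac:(unfold c; lra) ltac:(fold y; unfold c in *; lra)).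
      pose proof (hb d).
      assert (δ * (- 2 * ln c / δ) = - 2 * ln c) by (field; lra).
      nra. }
    destruct (ev_max _ _ Up Lo) as [N HN]. exists N. intros d Hd.
    destruct (HN d Hd). apply Rabs_def1; lra.
Qed.
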